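(* Let $X$ be a finite, connected geometric simplicial complex with vertex set $V$, let $q\in[1,\infty)$, and let $f,g: X\to\mathbb{R}$ be functions each obtained from a function on $V$ by extending linearly over simplices. Let $p$ be a balanced probability distribution on $V$. Let $G^{SP}_f=(V,p,D_f)$ and $G^{SP}_g=(V,p,D_g)$ be the shortest-path measure network representations of the merge trees $T_f$, $T_g$. Then \[ d^{GW}_q(G^{SP}_f,G^{SP}_g) \leq \left(|V|^{2/q}+2\right)\|f-g\|_{L^q(p)}. \]
   Context: Merge tree: for $f: X\to\mathbb{R}$, declare $x\sim y$ if $f(x)=f(y)=a$ and $x,y$ lie in the same connected component of $f^{-1}(-\infty,a]$; the merge tree is $T_f = X/\!\sim$, with $f$ descending to $T_f$. Let $\pi_f:V\to T_f$ be the restricted quotient map. The LCA matrix $W_f(v,w)$ is the maximum value of $f$ along the unique geodesic path from $\pi_f(v)$ to $\pi_f(w)$ in $T_f$. The shortest-path matrix $D_f(v,w)$ is the length of the unique geodesic path from $\pi_f(v)$ to $\pi_f(w)$ in $T_f$, where each tree edge between adjacent points has length equal to the absolute difference of their $f$-values; equivalently $D_f(v,w)=2W_f(v,w)-f(v)-f(w)$. A probability distribution $p$ on $V$ is balanced if $p(u)p(v)\le p(w)$ for all $u,v,w\in V$. $\|h\|_{L^q(p)} = (\sum_{v\in V}|h(v)|^q p(v))^{1/q}$. For finite measure networks $G_i=(V_i,p_i,W_i)$, with $\mathcal{C}(p_1,p_2)$ the nonnegative matrices with row sums $p_1$ and column sums $p_2$, $d^{GW}_q(G_1,G_2) = \tfrac12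 \min_{C\in\mathcal{C}(p_1,p_2)} (\sum_{i,j,k,l} |W_1(i,k)-W_2(j,l)|^q C_{i,j}C_{k,l})^{1/q}$. *)

(* Defs.v *)
From HB Require Import structures.
From mathcomp Require Import all_boot all_order all_algebra.
From mathcomp Require Import all_classical all_reals all_analysis.
Set Implicit Arguments. Unset Strict Implicit. Unset Printing Implicit Defensive.
Import Order.TTheory GRing.Theory Num.Theory.
Import numFieldNormedType.Exports.
Local Open Scope classical_set_scope.
Local Open Scope ring_scope.

Definition simplicial_complex (n : nat) (K : set {set 'I_n}) : Prop :=
  [/\ (forall i : 'I_n, K [set i]%SET),
      (forall s, K s -> s != (finset.set0 : {set 'I_n})) &
      (forall s t : {set 'I_n}, K s -> t \subset s -> t != (finset.set0 : {set 'I_n}) -> K t)].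

(* Geometric realization of K inside R^n ('rV[R]_n), vertex i = e_i;
   points are given by barycentric coordinates supported on a simplex. *)
Definition realization (R : realType) (n : nat) (K : set {set 'I_n})
  : set 'rV[R]_n :=
  [set x | exists2 s, K s &
     [/\ (forall i, 0 <= x 0 i), (forall i, i \notin s -> x 0 i = 0)
       & \sum_i x 0 i = 1]].

Definition vtx (R : realType) (n : nat) (i : 'I_n) : 'rV[R]_n :=
  \row_j (j == i)%:R.

Definition pl_ext (R : realType) (n : nat) (f : 'I_n -> R) (x : 'rV[R]_n) : R :=
  \sum_i x 0 i * f i.

(* LCA (merge) value in the merge tree T_F of F : X -> R:
   the least level a at which v and w lie in the same connected component
   of the sublevel set F^{-1}(-oo, a] (= max of F along the geodesic
   between pi(v), pi(w) in T_F). *)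
Definition merge_value (R : realType) (T : topologicalType) (X : set T)
  (F : T -> R) (x y : T) : R :=
  inf [set a : R | connected_component (X `&` [set z | F z <= a]) x y].

Definition lca_matrix (R : realType) (n : nat) (K : set {set 'I_n})
  (f : 'I_n -> R) (v w : 'I_n) : R :=
  merge_value (@realization R n K) (pl_ext f) (vtx R v) (vtx R w).

Definition sp_matrix (R : realType) (n : nat) (K : set {set 'I_n})
  (f : 'I_n -> R) (v w : 'I_n) : R :=
  2 * lca_matrix K f v w - f v - f w.

Definition prob_dist (R : realType) (n : nat) (p : 'I_n -> R) : Prop :=
  (forall i, 0 <= p i) /\ \sum_i p i = 1.

Definition balanced (R : realType) (n : nat) (p : 'I_n -> R) : Prop :=
  forall u v w, p u * p v <= p w.

Definition Lq_norm (R : realType) (n : nat) (p : 'I_n -> R) (q : R)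
  (h : 'I_n -> R) : R :=
  (\sum_v (`|h v| `^ q * p v)) `^ q^-1.

Definition coupling (R : realType) (n m : nat) (p1 : 'I_n -> R) (p2 : 'I_m -> R)
  (C : 'M[R]_(n, m)) : Prop :=
  [/\ (forall i j, 0 <= C i j),
      (forall i, \sum_j C i j = p1 i) &
      (forall j, \sum_i C i j = p2 j)].

(* q-Gromov-Wasserstein distance between (V1,p1,W1) and (V2,p2,W2);
   the minimum over the compact coupling polytope is written as an infimum. *)
Definition dGW (R : realType) (n m : nat) (q : R)
  (p1 : 'I_n -> R) (W1 : 'I_n -> 'I_n -> R)
  (p2 : 'I_m -> R) (W2 : 'I_m -> 'I_m -> R) : R :=
  2^-1 * inf [set c : R | exists2 C : 'M[R]_(n, m), coupling p1 p2 C &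
     c = (\sum_i \sum_j \sum_k \sum_l
            (`|W1 i k - W2 j l| `^ q * C i j * C k l)) `^ q^-1].

(* Main.v *)
Require Import Defs.
From HB Require Import structures.
From mathcomp Require Import all_boot all_order all_algebra.
From mathcomp Require Import all_classical all_reals all_analysis.
From mathcomp Require Import ring lra.
Import Order.TTheory GRing.Theory Num.Theory.
Import numFieldNormedType.Exports.
Local Open Scope classical_set_scope.
Local Open Scope ring_scope.

Lemma mv_le (R : realType) (T : topologicalType) (X : set T) (F G : T -> R) (B U : R) x y :
  connected X -> X x -> X y -> (forall z, X z -> G z <= U) ->
  (forall z, X z -> F z <= G z + B) ->
  merge_value X F x y <= merge_value X G x y + B.
Proof.
move=> cX Xx Xy GU FG.
rewrite /merge_value.
set SF := [set a | _]; set SG := [set a | _].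
have SGne : SG !=set0.
  exists U; rewrite /SG /=.
  have -> : X `&` [set z | G z <= U] = X.
    by apply/seteqP; split => [z []//|z Xz]; split => //; exact: GU.
  by rewrite connected_component_id.
have lbF : has_lbound SF.
  exists (F x) => a [C [Cx CA _] _].
  by have [_ /=] := CA x Cx.
rewrite -lerBlDr; apply: lb_le_inf => // a SGa.
rewrite lerBlDr.
apply: (ge_inf lbF).
rewrite /SF /=.
case: SGa => C [Cx CA Cc] Cy.
exists C => //; split => // z Cz; have [Xz /= Gz] := CA z Cz.
by split => //=; apply: le_trans (FG z Xz) _; rewrite lerD2r.
Qed.

Lemma vtx_real (R : realType) n (K : set {set 'I_n}) i :
  simplicial_complex K -> @realization R n K (vtx R i).
Proof.
case=> K1 _ _; exists [set i]%SET => //; split.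
- by move=> j; rewrite mxE ler0n.
- by move=> j; rewrite inE mxE => /negbTE ->.
- rewrite (bigD1 i) //= mxE eqxx big1 ?addr0 // => j ji.
  by rewrite mxE (negbTE ji).
Qed.

Lemma pl_diff (R : realType) n (K : set {set 'I_n}) (f g : 'I_n -> R) (A : R) z :
  (forall i, `|f i - g i| <= A) -> @realization R n K z ->
  `|pl_ext f z - pl_ext g z| <= A.
Proof.
move=> hA [s _ [z0 _ z1]].
rewrite /pl_ext -sumrB.
apply: le_trans (ler_norm_sum _ _ _) _.
apply: le_trans (_ : \sum_i z 0 i * A <= A).
  apply: ler_sum => i _; rewrite -mulrBr normrM ger0_norm //.
  exact: ler_wpM2l.
by rewrite -mulr_suml z1 mul1r.
Qed.

Lemma pl_bound (R : realType) n (K : set {set 'I_n}) (f : 'I_n -> R) z :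
  @realization R n K z -> pl_ext f z <= \sum_j `|f j|.
Proof.
move=> [s _ [z0 _ z1]].
rewrite /pl_ext.
apply: le_trans (_ : \sum_i z 0 i * \sum_j `|f j| <= _).
  apply: ler_sum => i _; apply: ler_wpM2l => //.
  apply: le_trans (ler_norm _) _.
  by rewrite (bigD1 i) //= lerDl sumr_ge0.
by rewrite -mulr_suml z1 mul1r.
Qed.

Lemma lca_diff (R : realType) n (K : set {set 'I_n}) (f g : 'I_n -> R) (A : R) v w :
  simplicial_complex K -> connected (@realization R n K) ->
  (forall i, `|f i - g i| <= A) ->
  `|lca_matrix K f v w - lca_matrix K g v w| <= A.
Proof.
move=> sK cX hA.
have hA' : forall i, `|g i - f i| <= A by move=> i; rewrite distrC.
have Xv := @vtx_real R n K v sK; have Xw := @vtx_real R n K w sK.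
have h1 : lca_matrix K g v w <= lca_matrix K f v w + A.
  apply: (@mv_le R _ _ _ _ A (\sum_j `|f j|)) => //.
    by move=> z Xz; exact: (@pl_bound R n K _ z Xz).
  move=> z Xz; have := @pl_diff R n K _ _ A z hA' Xz; rewrite ler_norml => /andP[_ h].
  by rewrite addrC -lerBlDr.
have h2 : lca_matrix K f v w <= lca_matrix K g v w + A.
  apply: (@mv_le R _ _ _ _ A (\sum_j `|g j|)) => //.
    by move=> z Xz; exact: (@pl_bound R n K _ z Xz).
  move=> z Xz; have := @pl_diff R n K _ _ A z hA Xz; rewrite ler_norml => /andP[_ h].
  by rewrite addrC -lerBlDr.
rewrite ler_norml; apply/andP; split; lra.
Qed.

Lemma sp_diff (R : realType) n (K : set {set 'I_n}) (f g : 'I_n -> R) (A : R) v w :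
  simplicial_complex K -> connected (@realization R n K) ->
  (forall i, `|f i - g i| <= A) ->
  `|sp_matrix K f v w - sp_matrix K g v w| <= 2 * A + `|f v - g v| + `|f w - g w|.
Proof.
move=> sK cX hA; have := @lca_diff R n K f g A v w sK cX hA.
rewrite /sp_matrix.
set a := lca_matrix K f v w; set b := lca_matrix K g v w => hab.
have -> : 2 * a - f v - f w - (2 * b - g v - g w) = 2 * (a - b) - (f v - g v) - (f w - g w) by ring.
apply: le_trans (ler_normB _ _) _; rewrite lerD2r.
apply: le_trans (ler_normB _ _) _; rewrite lerD2r.
by rewrite normrM ger0_norm // ler_wpM2l.
Qed.

Lemma powRK (R : realType) (x q : R) : 0 < q -> 0 <= x -> (x `^ q) `^ q^-1 = x.
Proof. by move=> q0 x0; rewrite -powRrM mulfV ?gt_eqF // powRr1. Qed.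

Lemma powRK' (R : realType) (x q : R) : 0 < q -> 0 <= x -> (x `^ q^-1) `^ q = x.
Proof. by move=> q0 x0; rewrite -powRrM mulVf ?gt_eqF // powRr1. Qed.

Lemma hbound (R : realType) n (p h : 'I_n -> R) (q : R) : 1 <= q -> prob_dist p -> balanced p ->
  forall v, `|h v| <= n%:R `^ (2 / q) * Lq_norm p q h.
Proof.
move=> q1 [p0 p1] bal v.
have q0 : 0 < q by lra.
set S := \sum_v0 `|h v0| `^ q * p v0.
have S0 : 0 <= S by apply: sumr_ge0 => i _; rewrite mulr_ge0 // powR_ge0.
have [u _ Hu] := @arg_maxP _ _ _ v xpredT p isT.
have n0 : (0 < n)%N by case: v => /= m; case: n {p p0 p1 bal h S S0 u Hu} => //.
have nu : 1 <= n%:R * p u.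
  rewrite -{1}p1; apply: le_trans (_ : \sum_(i : 'I_n) p u <= _).
    by apply: ler_sum => i _; exact: Hu.
  by rewrite sumr_const card_ord mulr_natl.
have pv : 1 <= n%:R ^+ 2 * p v.
  apply: le_trans (_ : (n%:R * p u) ^+ 2 <= _).
    by rewrite expr2; nra.
  by rewrite exprMn ler_wpM2l ?exprn_ge0 ?ler0n // expr2; exact: bal.
have hq : `|h v| `^ q <= n%:R ^+ 2 * S.
  apply: le_trans (_ : `|h v| `^ q * (n%:R ^+ 2 * p v) <= _).
    by rewrite -{1}[_ `^ q]mulr1 ler_wpM2l // powR_ge0.
  rewrite mulrCA ler_wpM2l ?exprn_ge0 ?ler0n //.
  by rewrite /S (bigD1 v) //= lerDl sumr_ge0 // => i _; rewrite mulr_ge0 // powR_ge0.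
rewrite -(@powRK R `|h v| q) //.
apply: le_trans (_ : (n%:R ^+ 2 * S) `^ q^-1 <= _).
  by apply: ge0_ler_powR; rewrite ?invr_ge0 ?nnegrE ?powR_ge0 ?mulr_ge0 ?exprn_ge0 ?ler0n //; lra.
rewrite powRM ?exprn_ge0 ?ler0n // /Lq_norm -/S.
by rewrite -powR_mulrn ?ler0n // -powRrM.
Qed.

Lemma conv2 (R : realType) (q t x y : R) : 1 <= q -> 0 <= t -> t <= 1 -> 0 <= x -> 0 <= y ->
  (t * x + (1 - t) * y) `^ q <= t * x `^ q + (1 - t) * y `^ q.
Proof.
move=> q1 t0 t1 x0 y0.
have := @convex_powR R q q1 (Itv01 t0 t1) x y.
rewrite !inE /= !in_itv /= !andbT => /(_ x0 y0).
by rewrite !convRE.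
Qed.

Lemma conv3 (R : realType) (q a b c x y z : R) : 1 <= q -> 0 <= a -> 0 <= b -> 0 <= c ->
  a + b + c = 1 -> 0 <= x -> 0 <= y -> 0 <= z ->
  (a * x + b * y + c * z) `^ q <= a * x `^ q + b * y `^ q + c * z `^ q.
Proof.
move=> q1 a0 b0 c0 s1 x0 y0 z0.
have [ab0|abp] := eqVneq (a + b) 0.
  have a00 : a = 0 by lra. have b00 : b = 0 by lra.
  have -> : c = 1 by lra.
  by rewrite a00 b00 !mul0r !add0r !mul1r.
have abpos : 0 < a + b by rewrite lt_def abp addr_ge0.
have e : a * x + b * y + c * z = (a + b) * (a / (a+b) * x + (1 - a/(a+b)) * y) + (1 - (a+b)) * z.
  have -> : 1 - (a + b) = c by lra.
  by field; rewrite gt_eqF.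
have ab1 : a + b <= 1 by lra.
have r1 : a / (a + b) <= 1 by rewrite ler_pdivrMr // mul1r lerDl.
have r0 : 0 <= a / (a + b) by rewrite divr_ge0 // addr_ge0.
have m0 : 0 <= a / (a + b) * x + (1 - a / (a + b)) * y.
  by rewrite addr_ge0 // mulr_ge0 // subr_ge0.
rewrite e; apply: (le_trans (@conv2 R _ _ _ _ q1 (addr_ge0 a0 b0) ab1 m0 z0)).
have : (a / (a + b) * x + (1 - a / (a + b)) * y) `^ q <= a / (a + b) * x `^ q + (1 - a / (a + b)) * y `^ q.
  exact: (@conv2 R).
move=> h.
have -> : 1 - (a + b) = c by lra.
rewrite lerD2r.
apply: le_trans (ler_wpM2l (ltW abpos) h) _.
rewrite le_eqVlt; apply/orP; left; apply/eqP; field; by rewrite gt_eqF.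
Qed.

Lemma dsum (R : realType) n (a b : R) (w p : 'I_n -> R) : \sum_i p i = 1 ->
  \sum_i \sum_k (a + b * w i + b * w k) * p i * p k = a + 2 * b * \sum_i w i * p i.
Proof.
move=> p1.
transitivity (\sum_i ((a + b * w i) * p i + b * p i * \sum_k w k * p k)).
  apply: eq_bigr => i _.
  transitivity (\sum_k ((a + b * w i) * p i * p k + b * p i * (w k * p k))).
    by apply: eq_bigr => k _; ring.
  by rewrite big_split /= -mulr_sumr p1 mulr1 -mulr_sumr.
rewrite big_split /= -mulr_suml.
transitivity (\sum_i (a * p i + b * (w i * p i)) + b * (\sum_i w i * p i)).
  by congr (_ + _); [apply: eq_bigr => i _; ring | rewrite -mulr_sumr p1 mulr1].
rewrite big_split /= -mulr_sumr -mulr_sumr p1; ring.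
Qed.

Lemma sum_bound (R : realType) n (p h : 'I_n -> R) (q A : R) :
  1 <= q -> prob_dist p -> 0 <= A -> (Lq_norm p q h = 0 -> A = 0) ->
  (forall i, `|h i| <= A) ->
  \sum_i \sum_k (2 * A + `|h i| + `|h k|) `^ q * p i * p k
    <= (2 * A + 2 * Lq_norm p q h) `^ q.
Proof.
move=> q1 [p0 p1] A0 NA hA.
have q0 : 0 < q by lra.
set N := Lq_norm p q h.
set S := \sum_v0 `|h v0| `^ q * p v0.
have S0 : 0 <= S by apply: sumr_ge0 => i _; rewrite mulr_ge0 // powR_ge0.
have NS : N `^ q = S by rewrite /N /Lq_norm -/S powRK'.
have N0 : 0 <= N by rewrite /N /Lq_norm powR_ge0.
have [Ne0|Npos] := eqVneq N 0.
  have A00 := NA Ne0.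
  have h0 : forall i, `|h i| = 0.
    by move=> i; have := hA i; rewrite A00 => hi; apply: le_anti; rewrite hi normr_ge0.
  rewrite big1 ?powR_ge0 // => i _; rewrite big1 // => k _.
  by rewrite A00 !h0 mulr0 !addr0 powR0 ?gt_eqF // !mul0r.
have Np : 0 < N by rewrite lt_def Npos N0.
set D := 2 * A + 2 * N.
have Dp : 0 < D by rewrite /D; lra.
set a := 2 * A / D. set b := N / D.
have key : forall i k, (2 * A + `|h i| + `|h k|) `^ q <=
   a * D `^ q + (b * (D / N) `^ q) * `|h i| `^ q + (b * (D / N) `^ q) * `|h k| `^ q.
  move=> i k.
  have e : 2 * A + `|h i| + `|h k| = a * D + b * (D / N * `|h i|) + b * (D / N * `|h k|).
    by rewrite /a /b; field; rewrite ?gt_eqF.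
  have a0 : 0 <= a by rewrite /a divr_ge0 // ?mulr_ge0 // ltW.
  have b0 : 0 <= b by rewrite /b divr_ge0 // ltW.
  have abc : a + b + b = 1 by rewrite /a /b /D; field; rewrite gt_eqF.
  have DN0 : 0 <= D / N by rewrite divr_ge0 // ltW.
  rewrite e; apply: le_trans (@conv3 R q a b b D (D / N * `|h i|) (D / N * `|h k|)
     q1 a0 b0 b0 abc (ltW Dp) (mulr_ge0 DN0 (normr_ge0 _)) (mulr_ge0 DN0 (normr_ge0 _))) _.
  rewrite !powRM // ?invr_ge0 ?(ltW Np) ?(ltW Dp) //.
  by rewrite !mulrA.
apply: le_trans (_ : \sum_i \sum_k (a * D `^ q + (b * (D / N) `^ q) * `|h i| `^ q
   + (b * (D / N) `^ q) * `|h k| `^ q) * p i * p k <= _).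
  apply: ler_sum => i _; apply: ler_sum => k _.
  by rewrite ler_wpM2r // ler_wpM2r // key.
rewrite dsum // -/S -NS.
have -> : 2 * (b * (D / N) `^ q) * N `^ q = 2 * b * ((D / N) `^ q * N `^ q) by ring.
rewrite -powRM ?divr_ge0 ?(ltW Np) ?(ltW Dp) // divfK ?gt_eqF //.
rewrite le_eqVlt; apply/orP; left; apply/eqP.
by rewrite /a /b mulrA -mulrDl -mulrDl mulfV ?gt_eqF // mul1r.
Qed.

Lemma diag_sum (R : realType) n (X : 'I_n -> 'I_n -> 'I_n -> 'I_n -> R) (p : 'I_n -> R) :
  let C := \matrix_(i, j) ((i == j)%:R * p i) in
  \sum_i \sum_j \sum_k \sum_l X i j k l * C i j * C k l =
  \sum_i \sum_k X i i k k * p i * p k.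
Proof.
move=> C; apply: eq_bigr => i _.
rewrite (bigD1 i) //= [X in _ + X]big1 ?addr0; last first.
  move=> j ji; apply: big1 => k _; apply: big1 => l _.
  by rewrite /C mxE eq_sym (negbTE ji) mul0r mulr0 mul0r.
apply: eq_bigr => k _.
rewrite (bigD1 k) //= [X in _ + X]big1 ?addr0; last first.
  by move=> l lk; rewrite /C !mxE eqxx (eq_sym k) (negbTE lk) mul0r mulr0.
by rewrite /C !mxE !eqxx !mul1r.
Qed.

Theorem corollary1 (R : realType) (n : nat) (K : set {set 'I_n})
  (q : R) (f g p : 'I_n -> R) :
  simplicial_complex K ->
  connected (@realization R n K) ->
  1 <= q ->
  prob_dist p ->
  balanced p ->
  dGW q p (sp_matrix K f) p (sp_matrix K g)
    <= (n%:R `^ (2 / q) + 2) * Lq_norm p q (fun v => f v - g v).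
Proof.
move=> sK cX q1 pd bal.
have q0 : 0 < q by lra.
set h := fun v => f v - g v.
set N := Lq_norm p q h.
set A := n%:R `^ (2 / q) * N.
have hA : forall i, `|f i - g i| <= A := @hbound R n p h q q1 pd bal.
have N0 : 0 <= N by rewrite /N /Lq_norm powR_ge0.
have A0 : 0 <= A by rewrite /A mulr_ge0 // powR_ge0.
have NA : N = 0 -> A = 0 by rewrite /A => ->; rewrite mulr0.
have [p0 p1] := pd.
pose C := \matrix_(i, j) ((i == j)%:R * p i) : 'M[R]_(n, n).
have cC : coupling p p C.
  split.
  - by move=> i j; rewrite mxE mulr_ge0 ?ler0n.
  - move=> i; rewrite (bigD1 i) //= big1 ?addr0 ?mxE ?eqxx ?mul1r // => j ji.
    by rewrite mxE eq_sym (negbTE ji) mul0r.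
  - move=> j; rewrite (bigD1 j) //= big1 ?addr0 ?mxE ?eqxx ?mul1r // => i ij.
    by rewrite mxE (negbTE ij) mul0r.
rewrite /dGW.
set V := (\sum_i \sum_j \sum_k \sum_l
   `|sp_matrix K f i k - sp_matrix K g j l| `^ q * C i j * C k l) `^ q^-1.
apply: le_trans (_ : 2^-1 * V <= _).
  rewrite ler_wpM2l ?invr_ge0 //.
  apply: ge_inf; last by exists C.
  by exists 0 => c [C' _ ->]; rewrite powR_ge0.
rewrite /V diag_sum.
apply: le_trans (_ : 2^-1 * (2 * A + 2 * N) <= _).
  rewrite ler_wpM2l ?invr_ge0 //.
  rewrite -[X in _ <= X](@powRK R _ q) //; last by lra.
  apply: ge0_ler_powR; rewrite ?invr_ge0 ?nnegrE ?powR_ge0 //; first by lra.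
    by apply: sumr_ge0 => i _; apply: sumr_ge0 => k _; rewrite !mulr_ge0 // powR_ge0.
  apply: le_trans (@sum_bound R n p h q A q1 pd A0 NA hA).
  apply: ler_sum => i _; apply: ler_sum => k _.
  rewrite ler_wpM2r // ler_wpM2r //.
  apply: ge0_ler_powR; rewrite ?nnegrE //; first by lra.
    by rewrite !addr_ge0 // mulr_ge0.
  exact: sp_diff.
have -> : (n%:R `^ (2 / q) + 2) * N = A + 2 * N by rewrite /A; ring.
lra.
Qed.
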